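(* Let $G$ be a finite simple connected graph and $H=C(G)$ its cone, obtained by adding a new vertex $w$ and joining every vertex of $G$ to $w$; work in $R=K[x_j: j\in V(H)]$. (i) If $(x_i: i\in V(G))\in\mathrm{Ass}(R/J(G)^t)$ for some $t\ge1$, then $(x_j: j\in V(H))\in\mathrm{Ass}(R/J(H)^{t+1})$. (ii) If $(x_i: i\in V(G))\in\mathrm{Ass}(R/I(G)^t)$ for some $t\geq2$, then $(x_j: j\in V(H))\in\mathrm{Ass}(R/I(H)^t)$.
   Context: For a graph $G$ with vertices indexing variables, the edge ideal is $I(G)=(x_ix_j:\{i,j\}\in E(G))$ and the cover ideal is $J(G)=\bigcap_{\{i,j\}\in E(G)}(x_i,x_j)$ (the Alexander dual of $I(G)$). $K$ is a field. *)

(* Defs.v *)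
From HB Require Import structures.
From mathcomp Require Import all_boot all_order all_algebra.
From mathcomp Require Import mpoly.
Set Implicit Arguments. Unset Strict Implicit. Unset Printing Implicit Defensive.
Import GRing.Theory.
Local Open Scope ring_scope.

Section Defs.
Variables (K : fieldType) (N : nat).
Local Notation R := {mpoly K[N]}.

Definition ideal_gen (S : R -> Prop) : R -> Prop :=
  fun p => exists rs : seq (R * R),
    (forall x, x \in rs -> S x.2) /\ p = \sum_(x <- rs) x.1 * x.2.

Definition var_ideal (A : pred 'I_N) : R -> Prop :=
  ideal_gen (fun p => exists2 i, A i & p = 'X_i).

Definition ideal_pow (I : R -> Prop) (t : nat) : R -> Prop :=
  ideal_gen (fun p => exists s : seq R,
    [/\ size s = t, forall q, q \in s -> I q & p = \prod_(q <- s) q]).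

Definition edge_ideal (e : rel 'I_N) : R -> Prop :=
  ideal_gen (fun p => exists i j, e i j /\ p = 'X_i * 'X_j).

Definition cover_ideal (e : rel 'I_N) : R -> Prop :=
  fun p => forall i j, e i j -> var_ideal (fun k => (k == i) || (k == j)) p.

Definition is_prime_ideal (P : R -> Prop) : Prop :=
  [/\ P 0, (forall a b, P a -> P b -> P (a + b)),
      (forall a b, P b -> P (a * b)),
      (exists g, ~ P g) &
      (forall a b, P (a * b) -> P a \/ P b)].

(* P \in Ass(R/I): P is prime and P = (I : f) for some f in R *)
Definition is_assoc (I P : R -> Prop) : Prop :=
  is_prime_ideal P /\ exists f : R, forall g, P g <-> I (g * f).
End Defs.

Definition simple_graph n (e : rel 'I_n) : Prop := (forall i j, e i j = e j i) /\ (forall i, e i i = false).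
Definition connected_graph n (e : rel 'I_n) : Prop := forall i j, connect e i j.

(* vertices of G are embedded in V(H) = 'I_n.+1 via widen; w = ord_max *)
Definition vG n (i : 'I_n) : 'I_n.+1 := widen_ord (leqnSn n) i.

Definition liftG n (e : rel 'I_n) : rel 'I_n.+1 :=
  fun a b => [exists i : 'I_n, exists j : 'I_n,
                 [&& a == vG i, b == vG j & e i j]].

Definition cone n (e : rel 'I_n) : rel 'I_n.+1 :=
  fun a b => liftG e a b ||
             ((a != b) && ((a == ord_max) || (b == ord_max))).

Definition oldV n : pred 'I_n.+1 := fun a => a != ord_max.

(* Main.v *)
Require Import Defs.
From HB Require Import structures.
From mathcomp Require Import all_boot all_order all_algebra.
From mathcomp Require Import mpoly.
From mathcomp Require Import zify.
From Stdlib Require Import Classical.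
Set Implicit Arguments. Unset Strict Implicit. Unset Printing Implicit Defensive.
Import GRing.Theory.
Local Open Scope ring_scope.

Section Gen.
Variables (K : fieldType) (N : nat).
Local Notation R := {mpoly K[N]}.
Local Notation mnm := 'X_{1..N}.
Local Notation ideal_gen := (@ideal_gen K N).
Local Notation ideal_pow := (@ideal_pow K N).

Lemma ig0 (S : R -> Prop) : ideal_gen S 0.
Proof. by exists [::]; split => //; rewrite big_nil. Qed.

Lemma igD S p q : ideal_gen S p -> ideal_gen S q -> ideal_gen S (p + q).
Proof.
case=> [rs [H1 ->]] [ss [H2 ->]]; exists (rs ++ ss); split.
  by move=> x; rewrite mem_cat => /orP[/H1|/H2].
by rewrite big_cat.
Qed.

Lemma igM S r q : ideal_gen S q -> ideal_gen S (r * q).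
Proof.
case=> [rs [H1 ->]]; exists [seq (r * x.1, x.2) | x <- rs]; split.
  by move=> x /mapP [y /H1 Hy ->].
by rewrite big_map mulr_sumr; apply: eq_bigr => x _; rewrite mulrA.
Qed.

Lemma igS (S : R -> Prop) p : S p -> ideal_gen S p.
Proof.
move=> Hp; exists [:: (1, p)]; split; first by move=> x; rewrite inE => /eqP ->.
by rewrite big_seq1 mul1r.
Qed.

Lemma ig_sum S (T : eqType) (r : seq T) (F : T -> R) :
  (forall x, x \in r -> ideal_gen S (F x)) -> ideal_gen S (\sum_(x <- r) F x).
Proof.
elim: r => [|a r IH] H; first by rewrite big_nil; apply: ig0.
rewrite big_cons; apply: igD; first by apply: H; rewrite mem_head.
by apply: IH => x Hx; apply: H; rewrite inE Hx orbT.
Qed.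

Definition upc (M : mnm -> Prop) := forall m m', M m -> (m <= m')%MM -> M m'.

Lemma supp_gen (S : R -> Prop) (M : mnm -> Prop) : upc M ->
  (forall q, S q -> forall m, m \in msupp q -> M m) ->
  forall p, ideal_gen S p -> forall m, m \in msupp p -> M m.
Proof.
move=> uM HS p [rs [Hrs ->]] m /msupp_sum_le /flattenP [s /mapP [x Hx ->]].
move=> /msuppM_le /allpairsP [[m1 m2] /= [_ H2 ->]].
rewrite filter_predT in Hx; apply: (uM m2); [exact: (HS _ (Hrs _ Hx)) | apply: lem_addl].
Qed.

Lemma gen_supp (S : R -> Prop) (M : mnm -> Prop) :
  (forall m, M m -> ideal_gen S 'X_[m]) ->
  forall p, (forall m, m \in msupp p -> M m) -> ideal_gen S p.
Proof.
move=> HM p Hp; rewrite [p]mpolyE; apply: ig_sum => m Hm.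
by rewrite -mul_mpolyC; apply: igM; apply: HM; apply: Hp.
Qed.

Definition Mpow (M : mnm -> Prop) t (m : mnm) :=
  exists us : seq mnm, [/\ size us = t, forall u, u \in us -> M u &
     (\big[+%MM/0%MM]_(u <- us) u <= m)%MM].

Lemma Mpow_upc M t : upc (Mpow M t).
Proof.
move=> m m' [us [H1 H2 H3]] Hle; exists us; split => //.
exact: lepm_trans H3 Hle.
Qed.

Lemma pow_gen (S : R -> Prop) (M : mnm -> Prop) t :
  (forall u, M u -> S 'X_[u]) ->
  forall p, (forall m, m \in msupp p -> Mpow M t m) -> ideal_pow S t p.
Proof.
move=> HM; apply: gen_supp => m [us [Hs Hu Hle]].
rewrite -(submK Hle) mpolyXD; apply: igM; apply: igS.
exists [seq 'X_[u] | u <- us]; split; first by rewrite size_map.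
  by move=> q /mapP [u /Hu /HM Hu' ->].
by rewrite big_map mpolyX_prod.
Qed.

Lemma gen_pow (S : R -> Prop) (M : mnm -> Prop) t :
  (forall q, S q -> forall m, m \in msupp q -> M m) ->
  forall p, ideal_pow S t p -> forall m, m \in msupp p -> Mpow M t m.
Proof.
move=> HS; apply: supp_gen; first exact: Mpow_upc.
move=> q [s [<- Hs ->]] {q}.
elim: s Hs => [|a s IH] Hs m.
  rewrite big_nil msupp1 inE => /eqP ->; exists [::]; split => //.
  by rewrite big_nil lepm_refl.
rewrite big_cons => /msuppM_le /allpairsP [[m1 m2] /= [H1 H2 ->]].
have [us [Hus1 Hus2 Hus3]] := IH (fun q Hq => Hs q (mem_behead (s := a :: s) Hq)) _ H2.
exists (m1 :: us); split; first by rewrite /= Hus1.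
  move=> u; rewrite inE => /orP [/eqP ->|/Hus2 //].
  by apply: (HS a) => //; apply: Hs; rewrite mem_head.
rewrite big_cons; apply/mnm_lepP => i; rewrite !mnmDE.
by rewrite leq_add2l; move/mnm_lepP: Hus3.
Qed.


Local Notation var_ideal := (@var_ideal K N).
Local Notation cover_ideal := (@cover_ideal K N).
Local Notation edge_ideal := (@edge_ideal K N).
Local Notation is_assoc := (@is_assoc K N).

Definition MV (A : pred 'I_N) (m : mnm) := exists2 i, A i & (0 < m i)%N.

Lemma MV_upc A : upc (MV A).
Proof. move=> m m' [i Hi Hm] /mnm_lepP H; exists i => //; exact: leq_trans Hm (H i). Qed.

Lemma var_char A q : var_ideal A q -> forall m, m \in msupp q -> MV A m.
Proof.
move=> H; apply: (supp_gen _ _ H); first exact: MV_upc.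
move=> q' [i Hi ->] m; rewrite msuppX inE => /eqP ->; exists i => //.
by rewrite mnm1E eqxx.
Qed.

Lemma var_gen A u : MV A u -> var_ideal A 'X_[u].
Proof.
case=> i Hi Hu; have Hle : (U_(i) <= u)%MM by rewrite lep1mP -lt0n.
by rewrite -(submK Hle) mpolyXD; apply: igM; apply: igS; exists i.
Qed.

Definition MC (e : rel 'I_N) (m : mnm) :=
  forall i j, e i j -> (0 < m i)%N \/ (0 < m j)%N.

Lemma MC_upc e : upc (MC e).
Proof.
move=> m m' H /mnm_lepP Hle i j Hij.
case: (H i j Hij) => Hm; [left; exact: leq_trans Hm (Hle i)|right; exact: leq_trans Hm (Hle j)].
Qed.

Lemma cover_char e q : cover_ideal e q -> forall m, m \in msupp q -> MC e m.
Proof.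
move=> H m Hm i j Hij; have [k Hk Hmk] := var_char (H i j Hij) Hm.
by case/orP: Hk => /eqP Hk; subst k; [left|right].
Qed.

Lemma cover_gen e u : MC e u -> cover_ideal e 'X_[u].
Proof.
move=> H i j Hij; apply: var_gen.
by case: (H i j Hij) => Hu; [exists i | exists j]; rewrite ?eqxx ?orbT.
Qed.

Definition ME (e : rel 'I_N) (m : mnm) :=
  exists i j, e i j /\ (U_(i) + U_(j) <= m)%MM.

Lemma ME_upc e : upc (ME e).
Proof.
move=> m m' [i [j [Hij H]]] Hle; exists i, j; split => //; exact: lepm_trans H Hle.
Qed.

Lemma edge_char e q : edge_ideal e q -> forall m, m \in msupp q -> ME e m.
Proof.
move=> H; apply: (supp_gen _ _ H); first exact: ME_upc.
move=> q' [i [j [Hij ->]]] m; rewrite -mpolyXD msuppX inE => /eqP ->.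
by exists i, j; split => //; exact: lepm_refl.
Qed.

Lemma edge_gen e u : ME e u -> edge_ideal e 'X_[u].
Proof.
case=> i [j [Hij Hle]]; rewrite -(submK Hle) mpolyXD; apply: igM; apply: igS.
by exists i, j; rewrite mpolyXD.
Qed.

Lemma nz_mnm (m : mnm) : m != 0%MM -> exists i, (0 < m i)%N.
Proof.
move=> Hm; case/boolP: [exists i, 0 < m i]%N => [/existsP [i Hi]|/existsPn Hn]; first by exists i.
case/negP: Hm; apply/eqP/mnmP => i; rewrite mnm0E; move: (Hn i).
by rewrite lt0n negbK => /eqP.
Qed.

Lemma vpT_char g : var_ideal predT g <-> g@_0 = 0.
Proof.
split.
  move=> H; apply/eqP; rewrite mcoeff_eq0; apply/negP => H0.
  by have [i _] := var_char H H0; rewrite mnm0E.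
move=> H0; apply: (gen_supp (M := MV predT)); first by move=> m; exact: var_gen.
move=> m Hm; have : m != 0%MM.
  by apply: contraTneq Hm => ->; rewrite mcoeff_msupp H0 eqxx.
by case/nz_mnm => i Hi; exists i.
Qed.

Lemma mc0M (a b : R) : (a * b)@_0 = a@_0 * b@_0.
Proof. exact: (@mcoeff0_is_multiplicative N K).1. Qed.

Lemma assoc_extract (S : R -> Prop) (M : mnm -> Prop) (A : pred 'I_N) t :
  (forall u, M u -> S 'X_[u]) -> (forall q, S q -> forall m, m \in msupp q -> M m) ->
  is_assoc (ideal_pow S t) (var_ideal A) ->
  exists m, ~ Mpow M t m /\ forall i, A i -> Mpow M t (U_(i) + m).
Proof.
move=> Hg Hc [[_ _ HM [g Hg0] _] [f Hf]].
have N1 : ~ var_ideal A 1 by move=> H1; apply: Hg0; rewrite -[g]mulr1; apply: HM.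
have Nf : ~ ideal_pow S t f by rewrite -[f]mul1r => /Hf.
have [m [Hm Hnm]] : exists m, m \in msupp f /\ ~ Mpow M t m.
  apply: NNPP => Hno; apply: Nf; apply: (pow_gen Hg) => m Hm.
  by apply: NNPP => Hnm; apply: Hno; exists m.
exists m; split => // i Hi.
have HX : var_ideal A 'X_i by apply: igS; exists i.
move/Hf: HX; rewrite mulrC => HX; apply: (gen_pow Hc HX).
by rewrite mcoeff_msupp mcoeffMX -mcoeff_msupp.
Qed.

Lemma assoc_concl (S : R -> Prop) (M : mnm -> Prop) t (mf : mnm) :
  (forall u, M u -> S 'X_[u]) -> (forall q, S q -> forall m, m \in msupp q -> M m) ->
  (forall j, Mpow M t (U_(j) + mf)) -> ~ Mpow M t mf ->
  is_assoc (ideal_pow S t) (var_ideal predT).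
Proof.
move=> Hg Hc Hj Hn; split.
  split.
  - by apply/vpT_char; rewrite mcoeff0.
  - by move=> a b /vpT_char Ha /vpT_char Hb; apply/vpT_char; rewrite mcoeffD Ha Hb addr0.
  - by move=> a b /vpT_char Hb; apply/vpT_char; rewrite mc0M Hb mulr0.
  - by exists 1 => /vpT_char; rewrite mcoeff1 eqxx => /eqP; rewrite oner_eq0.
  - move=> a b /vpT_char; rewrite mc0M => /eqP; rewrite mulf_eq0.
    by case/orP => /eqP H; [left|right]; apply/vpT_char.
exists 'X_[mf] => g; split.
  move=> /vpT_char Hg0; apply: (pow_gen Hg) => m /msuppM_le /allpairsP [[m1 m2] /= [H1 H2 ->]].
  move: H2; rewrite msuppX inE => /eqP ->.
  have : m1 != 0%MM by apply: contraTneq H1 => ->; rewrite mcoeff_msupp Hg0 eqxx.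
  case/nz_mnm => i Hi; apply: (Mpow_upc (Hj i)); apply/mnm_lepP => k.
  by rewrite !mnmDE leq_add2r mnm1E; case: eqP => // <-.
move=> H; apply/vpT_char; apply/eqP; apply: contraT => Hg0; exfalso; apply: Hn.
by apply: (gen_pow Hc H); rewrite mcoeff_msupp -{1}[mf]addm0 mcoeffMX.
Qed.

End Gen.
Local Close Scope ring_scope.
Section NatHelp.
Variable (T : eqType).
Implicit Types (us : seq T) (F : T -> nat).

Lemma sum_ge_size us F : (forall u, u \in us -> 0 < F u) -> size us <= \sum_(u <- us) F u.
Proof.
elim: us => [|a s IH] H; first by rewrite big_nil.
rewrite big_cons /=; have := H a (mem_head _ _).
have := IH (fun u Hu => H u (mem_behead (s := a :: s) Hu)); lia.
Qed.

Lemma sum_rem us u F : u \in us -> \sum_(x <- us) F x = F u + \sum_(x <- rem u us) F x.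
Proof. by move=> Hu; rewrite (perm_big _ (perm_to_rem Hu)) big_cons. Qed.

Lemma sum_mem us u F : u \in us -> F u <= \sum_(x <- us) F x.
Proof. by move=> Hu; rewrite (sum_rem F Hu) leq_addr. Qed.

Lemma sum_addc us F c : \sum_(x <- us) (F x + c) = \sum_(x <- us) F x + c * size us.
Proof.
elim: us => [|a s IH]; first by rewrite !big_nil muln0.
by rewrite !big_cons IH /=; lia.
Qed.
End NatHelp.

Section Graph.
Variables (n : nat) (e : rel 'I_n).
Hypothesis (Hsg : simple_graph e).
Local Notation w := (@ord_max n).
Local Notation mnm := 'X_{1..n.+1}.

Lemma vG_neq_w (i : 'I_n) : vG i != w.
Proof. by rewrite -val_eqE /= neq_ltn ltn_ord. Qed.

Lemma liftG_old a b : liftG e a b -> [/\ a != w, b != w & a != b].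
Proof.
move/existsP => [i /existsP [j /and3P [/eqP -> /eqP -> Hij]]].
split; try exact: vG_neq_w.
apply/negP => /eqP /(congr1 val) /= /val_inj Hij'; subst j.
by case: Hsg => _ H; rewrite H in Hij.
Qed.

Lemma liftG_sym a b : liftG e a b = liftG e b a.
Proof.
apply/idP/idP => /existsP [i /existsP [j /and3P [Ha Hb Hij]]];
  apply/existsP; exists j; apply/existsP; exists i; rewrite Ha Hb /=;
  by case: Hsg => -> _.
Qed.

Lemma liftG_cone a b : liftG e a b -> cone e a b.
Proof. by move=> H; rewrite /cone H. Qed.

Lemma cone_neq a b : cone e a b -> a != b.
Proof. by case/orP => [/liftG_old [] //|/andP []]. Qed.

Lemma cone_old a b : cone e a b -> a != w -> b != w -> liftG e a b.
Proof.
case/orP => [//|/andP [_ /orP [/eqP -> | /eqP ->]]]; by rewrite eqxx.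
Qed.

Lemma cone_w a : a != w -> cone e a w.
Proof. by move=> H; rewrite /cone H eqxx orbT orbT. Qed.

Lemma cone_w' a : a != w -> cone e w a.
Proof. by move=> H; rewrite /cone eq_sym H eqxx orbT. Qed.

Definition dropw (u : mnm) : mnm := [multinom if i == w then 0%N else u i | i < n.+1].

Lemma sumE (us : seq mnm) k :
  (\big[+%MM/0%MM]_(u <- us) u) k = \sum_(u <- us) u k.
Proof. exact: mnm_sumE. Qed.

Lemma Mpow_mono (M M' : mnm -> Prop) t m :
  (forall u, M u -> M' u) -> Mpow M t m -> Mpow M' t m.
Proof. by move=> H [us [H1 H2 H3]]; exists us; split => // u /H2 /H. Qed.

Lemma Mpow_dropw (M : mnm -> Prop) t m :
  (forall u, M u -> M (dropw u)) -> Mpow M t m -> Mpow M t (dropw m).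
Proof.
move=> HM [us [H1 H2 /mnm_lepP H3]]; exists (map dropw us); split.
- by rewrite size_map.
- by move=> u /mapP [v /H2 /HM Hv ->].
apply/mnm_lepP => k; rewrite sumE big_map mnmE.
case: eqP => Hk.
  by rewrite big1 // => u _; rewrite mnmE Hk eqxx.
apply: leq_trans (H3 k); rewrite sumE; apply: leq_sum => u _; by rewrite mnmE; case: eqP.

Qed.
Lemma dropw_le m : (dropw m <= m)%MM.
Proof. by apply/mnm_lepP => k; rewrite mnmE; case: eqP. Qed.

Lemma extract_dropw (M : mnm -> Prop) t :
  (forall u, M u -> M (dropw u)) ->
  (exists m : mnm, ~ Mpow M t m /\ forall i, oldV i -> Mpow M t (U_(i) + m)) ->
  exists m : mnm, [/\ m w = 0%N, ~ Mpow M t m & forall i, oldV i -> Mpow M t (U_(i) + m)].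
Proof.
move=> HM [m [Hn Hi]]; exists (dropw m); split.
- by rewrite mnmE eqxx.
- by move=> H; apply: Hn; apply: (Mpow_upc H); apply: dropw_le.
move=> i Hold; have := Mpow_dropw HM (Hi i Hold).
suff -> : dropw (U_(i) + m) = (U_(i) + dropw m)%MM by [].
apply/mnmP => k; rewrite !mnmE; case: eqP => // ->.
by move: Hold; rewrite /oldV => /negbTE ->.
Qed.


Definition addw (u : mnm) : mnm := [multinom u i + (i == w) | i < n.+1].
Definition oneV : mnm := [multinom nat_of_bool (i != w) | i < n.+1].
Definition cv (v : 'I_n.+1) : mnm :=
  [multinom nat_of_bool ((i != w) && (i != v)) + (i == w) | i < n.+1].
Definition mf1 t (m : mnm) : mnm := [multinom (if i == w then t else 1%N) + m i | i < n.+1].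

Lemma MC_addw u : MC (liftG e) u -> MC (cone e) (addw u).
Proof.
move=> H a b Hab; rewrite !mnmE.
have [->|Ha] := eqVneq a w; first by left; rewrite ?eqxx /= addn1.
have [->|Hb] := eqVneq b w; first by right; rewrite ?eqxx /= addn1.
rewrite ?(negbTE Ha) ?(negbTE Hb) /= !addn0; exact: H (cone_old Hab Ha Hb).
Qed.

Lemma MC_oneV : MC (cone e) oneV.
Proof.
move=> a b /cone_neq Hab; rewrite !mnmE.
have [Ha|Ha] := eqVneq a w; last by left.
by right; move: Hab; rewrite Ha eq_sym => ->.
Qed.

Lemma MC_cv v : MC (cone e) (cv v).
Proof.
move=> a b Hab; rewrite !mnmE.
have [->|Ha] := eqVneq a w; first by left; rewrite ?eqxx /= addn1.
have [->|Hb] := eqVneq b w; first by right; rewrite ?eqxx /= addn1.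
have [_ _ Hne] := liftG_old (cone_old Hab Ha Hb).
rewrite /=; have [Hav|Hav] := eqVneq a v; last by left; rewrite addn0.
by right; subst a; rewrite eq_sym Hne.
Qed.

Lemma sum_addw (us : seq mnm) k :
  \sum_(u <- us) addw u k = (\sum_(u <- us) u k + (k == w) * size us)%N.
Proof.
rewrite -sum_addc; apply: eq_bigr => u _; by rewrite /addw mnmE.
Qed.

Lemma p1a t (m : mnm) (v : 'I_n.+1) : v != w -> m w = 0%N ->
  (forall i, oldV i -> Mpow (MC (liftG e)) t (U_(i) + m)) ->
  forall j, Mpow (MC (cone e)) t.+1 (U_(j) + mf1 t m).
Proof.
move=> Hv Hmw Hi j; have [Hj|Hj] := eqVneq j w.
- have [us [Hs Hus /mnm_lepP Hle]] := Hi v Hv.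
  exists (cv v :: map addw us); split.
  + by rewrite /= size_map Hs.
  + move=> u; rewrite inE => /orP [/eqP -> | /mapP [x /Hus Hx ->]];
      [exact: MC_cv | exact: MC_addw].
  + apply/mnm_lepP => k; have := Hle k; rewrite !sumE big_cons big_map.
    rewrite sum_addw Hs !mnmDE !mnm1E !mnmE Hj.
    have [->|Hk] := eqVneq k w.
      rewrite Hmw (negbTE Hv) /=; lia.
    have [->|Hkv] := eqVneq k v; first by rewrite ?eqxx /=; lia.
    rewrite /=; lia.
- have [us [Hs Hus /mnm_lepP Hle]] := Hi j Hj.
  exists (oneV :: map addw us); split.
  + by rewrite /= size_map Hs.
  + move=> u; rewrite inE => /orP [/eqP -> | /mapP [x /Hus Hx ->]];
      [exact: MC_oneV | exact: MC_addw].
  + apply/mnm_lepP => k; have := Hle k; rewrite !sumE big_cons big_map.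
    rewrite sum_addw Hs !mnmDE !mnm1E !mnmE.
    have [->|Hk] := eqVneq k w.
      rewrite /=; lia.
    rewrite /=; lia.
Qed.


Lemma MC_dropw u : MC (liftG e) u -> MC (liftG e) (dropw u).
Proof.
move=> H a b Hab; have [Ha Hb _] := liftG_old Hab.
by rewrite !mnmE (negbTE Ha) (negbTE Hb); exact: H.
Qed.

Lemma MC_cone_lift u : MC (cone e) u -> MC (liftG e) u.
Proof. by move=> H a b /liftG_cone /H. Qed.

Lemma p1b t (m : mnm) : m w = 0%N -> ~ Mpow (MC (liftG e)) t m ->
  ~ Mpow (MC (cone e)) t.+1 (mf1 t m).
Proof.
move=> Hmw Hn [us [Hs Hus /mnm_lepP Hle]].
have [u Hu Huw] : exists2 u, u \in us & u w = 0%N.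
  apply: NNPP => H.
  have H1 : forall u, u \in us -> (0 < u w)%N.
    by move=> u Hu; rewrite lt0n; apply/eqP => Hw; apply: H; exists u.
  have := sum_ge_size H1; have := Hle w; rewrite sumE /mf1 mnmE eqxx Hmw Hs. move=> H2 H3; have := leq_trans H3 H2; by rewrite addn0 ltnn.
have Hold : forall a, a != w -> (0 < u a)%N.
  by move=> a Ha; case: (Hus u Hu a w (cone_w Ha)) => //; rewrite Huw.
apply: Hn; exists (map dropw (rem u us)); split.
- by rewrite size_map size_rem // Hs.
- move=> x /mapP [y Hy ->]; apply: MC_dropw; apply: MC_cone_lift; apply: Hus.
  exact: mem_rem Hy.
apply/mnm_lepP => k; rewrite sumE big_map; have := Hle k.
rewrite sumE (sum_rem _ Hu) /mf1 mnmE.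
have [->|Hk] := eqVneq k w.
  by move=> _; rewrite big1 // => y _; rewrite mnmE eqxx.
rewrite (eq_bigr (fun y : mnm => y k)) => [|y _]; last by rewrite mnmE (negbTE Hk).
have := Hold k Hk; rewrite /=; lia.
Qed.

Lemma ME_dropw u : ME (liftG e) u -> ME (liftG e) (dropw u).
Proof.
case=> i [j [Hij /mnm_lepP Hle]]; have [Hi Hj _] := liftG_old Hij.
exists i, j; split => //; apply/mnm_lepP => k; have := Hle k.
rewrite mnmDE !mnm1E /dropw mnmE.
have [->|Hk] := eqVneq k w; last by [].
by rewrite (negbTE Hi) (negbTE Hj).
Qed.

Lemma ME_lift_cone u : ME (liftG e) u -> ME (cone e) u.
Proof. by case=> i [j [Hij Hle]]; exists i, j; split => //; apply: liftG_cone. Qed.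

Definition shiftv (v : 'I_n.+1) (u : mnm) : mnm :=
  [multinom (u i - (i == v) + (i == w))%N | i < n.+1].

Lemma ME_shift_aux (v i j : 'I_n.+1) (u : mnm) :
  liftG e i j -> (U_(i) + U_(j) <= u)%MM -> v = i -> ME (cone e) (shiftv v u).
Proof.
move=> Hij /mnm_lepP Hle Hvi; have [Hi Hj Hne] := liftG_old Hij.
exists j, w; split; first exact: cone_w.
apply/mnm_lepP => k; rewrite mnmDE !mnm1E mnmE.
have := Hle j; rewrite mnmDE !mnm1E eqxx.
have [->|Hkw] := eqVneq k w; first by rewrite (negbTE Hj) /=; lia.
have [->|Hkj] := eqVneq k j.
  by rewrite Hvi (negbTE Hne) eq_sym (negbTE Hne) /=; lia.
by [].
Qed.

Lemma ME_shift v u : ME (liftG e) u -> ME (cone e) (shiftv v u).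
Proof.
case=> i [j [Hij Hle]].
have [Hvi|Hvi] := eqVneq v i; first exact: ME_shift_aux Hij Hle Hvi.
have [Hvj|Hvj] := eqVneq v j.
  by apply: (ME_shift_aux (j := i)) Hvj; [rewrite liftG_sym | rewrite addmC].
exists i, j; split; first exact: liftG_cone.
move/mnm_lepP: Hle => Hle; apply/mnm_lepP => k; have := Hle k.
rewrite !mnmDE !mnm1E mnmE.
have [->|Hkv] := eqVneq k v.
  by rewrite eq_sym (negbTE Hvi) eq_sym (negbTE Hvj).
by rewrite /=; lia.
Qed.

Lemma p2a t (m : mnm) (v : 'I_n.+1) : v != w -> m w = 0%N ->
  ~ Mpow (ME (liftG e)) t m ->
  (forall i, oldV i -> Mpow (ME (liftG e)) t (U_(i) + m)) ->
  forall j, Mpow (ME (cone e)) t (U_(j) + m).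
Proof.
move=> Hv Hmw Hn Hi j; have [Hj|Hj] := eqVneq j w; last first.
  exact: Mpow_mono ME_lift_cone (Hi j Hj).
have [us [Hs Hus /mnm_lepP Hle]] := Hi v Hv.
have [u Hu Huv] : exists2 u, u \in us & (0 < u v)%N.
  apply: NNPP => H; apply: Hn; exists us; split => //.
  apply/mnm_lepP => k; have := Hle k; rewrite sumE mnmDE mnm1E.
  have [->|Hkv] := eqVneq k v; last by [].
  move=> _; rewrite big_seq big1 // => u Hu.
  by apply/eqP; rewrite -leqn0 leqNgt; apply/negP => Hp; apply: H; exists u.
have Hsz : (0 < size us)%N by rewrite lt0n size_eq0; apply/eqP => H0; rewrite H0 in Hu.
exists (shiftv v u :: rem u us); split.
- by rewrite /= size_rem // prednK.
- move=> x; rewrite inE => /orP [/eqP -> | Hx]; first exact: ME_shift (Hus u Hu).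
  by apply: ME_lift_cone; apply: Hus; exact: mem_rem Hx.
apply/mnm_lepP => k; have := Hle k; rewrite !sumE big_cons (sum_rem _ Hu).
rewrite !mnmDE !mnm1E mnmE Hj.
have [->|Hkw] := eqVneq k w; first by rewrite Hmw (negbTE Hv) /=; lia.
have [->|Hkv] := eqVneq k v; first by rewrite /=; lia.
by rewrite /=; lia.
Qed.

Lemma p2b t (m : mnm) : m w = 0%N -> ~ Mpow (ME (liftG e)) t m ->
  ~ Mpow (ME (cone e)) t m.
Proof.
move=> Hmw Hn [us [Hs Hus Hle]]; apply: Hn; exists us; split => // u Hu.
have Huw : u w = 0%N.
  move/mnm_lepP: Hle => /(_ w); rewrite sumE Hmw => H.
  by apply/eqP; rewrite -leqn0; apply: leq_trans (sum_mem _ Hu) H.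
case: (Hus u Hu) => i [j [Hij /mnm_lepP Hle']].
have Hi : i != w.
  by apply/eqP => Hiw; move: (Hle' w); rewrite mnmDE !mnm1E Hiw eqxx Huw.
have Hj : j != w.
  by apply/eqP => Hjw; move: (Hle' w); rewrite mnmDE !mnm1E Hjw eqxx Huw addn1.
by exists i, j; split; [exact: cone_old | apply/mnm_lepP].
Qed.

End Graph.
Theorem lemma3p5 (K : fieldType) (n : nat) (e : rel 'I_n) :
  (0 < n)%N -> simple_graph e -> connected_graph e ->
  (forall t : nat, (1 <= t)%N ->
     is_assoc (ideal_pow (cover_ideal (K := K) (liftG e)) t)
              (var_ideal (@oldV n)) ->
     is_assoc (ideal_pow (cover_ideal (K := K) (cone e)) t.+1)
              (var_ideal predT)) /\
  (forall t : nat, (2 <= t)%N ->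
     is_assoc (ideal_pow (edge_ideal (K := K) (liftG e)) t)
              (var_ideal (@oldV n)) ->
     is_assoc (ideal_pow (edge_ideal (K := K) (cone e)) t)
              (var_ideal predT)).
Proof.
move=> Hn Hsg _; pose v : 'I_n.+1 := vG (Ordinal Hn).
have Hv : v != ord_max by apply: vG_neq_w.
split.
- move=> t _ Hass.
  have := assoc_extract (@cover_gen K _ _) (@cover_char K _ _) Hass.
  case/(extract_dropw (MC_dropw Hsg)) => m [Hmw Hnm Hi].
  apply: (assoc_concl (M := MC (cone e)) (mf := mf1 t m)).
  + exact: cover_gen.
  + exact: cover_char.
  + exact: (p1a Hsg Hv Hmw Hi).
  + exact: (p1b Hsg Hmw Hnm).
- move=> t _ Hass.
  have := assoc_extract (@edge_gen K _ _) (@edge_char K _ _) Hass.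
  case/(extract_dropw (ME_dropw Hsg)) => m [Hmw Hnm Hi].
  apply: (assoc_concl (M := ME (cone e)) (mf := m)).
  + exact: edge_gen.
  + exact: edge_char.
  + exact: (p2a Hsg Hv Hmw Hnm Hi).
  + exact: (p2b Hmw Hnm).
Qed.
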